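(* Let $a_0, a_1 \in \mathbb{Z}$ and let $u_0, u_1$ be positive rational numbers with $u_0 > u_1$ such that \[ a_0 \arctan u_0 + a_1 \arctan u_1 = \frac{\pi}{4}. \] Then the real number $\alpha := \dfrac{\arctan u_0}{\arctan u_1}$ is irrational. *)

(* Defs.v *)
From Stdlib Require Import Reals QArith Qreals.
Open Scope R_scope.

Definition irrational (x : R) : Prop := ~ exists q : Q, x = Q2R q.

(* Main.v *)
Require Import Defs.
From Stdlib Require Import Reals QArith Qreals ZArith Znumtheory Lia Lra.
Open Scope R_scope.

Lemma lowest (p q : Z) : (q > 0)%Z -> exists p' q', (q' > 0)%Z /\ Z.gcd p' q' = 1%Z /\ (p * q' = p' * q)%Z.
Proof.
  intros Hq. set (g := Z.gcd p q).
  assert (Hg0 : g <> 0%Z). { unfold g; intro H; apply Z.gcd_eq_0 in H; lia. }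
  assert (Hgp : (0 <= g)%Z) by apply Z.gcd_nonneg.
  destruct (Z.gcd_divide_l p q) as [a Ha]. destruct (Z.gcd_divide_r p q) as [b Hb].
  fold g in Ha, Hb.
  exists a, b. split; [nia|]. split; [|rewrite Ha, Hb; ring].
  pose proof (Z.gcd_div_gcd p q g Hg0 eq_refl) as H.
  replace (p / g)%Z with a in H by (rewrite Ha, Z.div_mul by exact Hg0; reflexivity).
  replace (q / g)%Z with b in H by (rewrite Hb, Z.div_mul by exact Hg0; reflexivity).
  exact H.
Qed.

Lemma Q2R_lowest (r : Q) : exists p q, (q > 0)%Z /\ Z.gcd p q = 1%Z /\ IZR p = IZR q * Q2R r.
Proof.
  destruct r as [n d]. destruct (lowest n (Z.pos d)) as (p' & q' & H1 & H2 & H3); [lia|].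
  exists p', q'. split; [exact H1|]. split; [exact H2|].
  unfold Q2R; simpl.
  assert (E : IZR n * IZR q' = IZR p' * IZR (Z.pos d)) by (rewrite <- !mult_IZR; f_equal; exact H3).
  assert (IZR (Z.pos d) > 0) by (apply IZR_lt; lia).
  field_simplify_eq; [| lra]. lra.
Qed.

Lemma div_pow (p q : Z) (k : nat) : Z.gcd p q = 1%Z -> (q | p ^ Z.of_nat k)%Z -> (q | 1)%Z.
Proof.
  intros Hg. induction k as [|k IH]; intros H.
  - simpl in H. exact H.
  - apply IH. rewrite Nat2Z.inj_succ, Z.pow_succ_r in H by lia.
    apply Z.gauss with p; [exact H|]. rewrite Z.gcd_comm; exact Hg.
Qed.

Fixpoint sp (p q : Z) (k : nat) : Z * Z :=
  match k with
  | O => (2%Z, p)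
  | S k => let (a, b) := sp p q k in (b, p * b - q * q * a)%Z
  end.

Lemma sp_S p q k : sp p q (S k) = (snd (sp p q k), p * snd (sp p q k) - q * q * fst (sp p q k))%Z.
Proof. simpl. destruct (sp p q k); reflexivity. Qed.

Lemma cos_rec (x f : R) : cos (x + f) = 2 * cos f * cos x - cos (x - f).
Proof. rewrite cos_plus, cos_minus. ring. Qed.

Lemma sp_real p q c f k : IZR p = IZR q * c -> c = 2 * cos f ->
  IZR (fst (sp p q k)) = IZR q ^ k * (2 * cos (INR k * f)) /\
  IZR (snd (sp p q k)) = IZR q ^ (S k) * (2 * cos (INR (S k) * f)).
Proof.
  intros Hp Hc. induction k as [|k [IH1 IH2]].
  - simpl. split. + rewrite Rmult_0_l, cos_0. ring. + rewrite Rmult_1_l, Hp, Hc. ring.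
  - rewrite sp_S. simpl fst; simpl snd. split; [exact IH2|].
    rewrite minus_IZR, !mult_IZR, IH1, IH2, Hp, Hc.
    replace (INR (S (S k)) * f) with (INR (S k) * f + f) by (rewrite !S_INR; ring).
    rewrite cos_rec.
    replace (INR (S k) * f - f) with (INR k * f) by (rewrite !S_INR; ring).
    simpl pow. ring.
Qed.

Lemma sp_mod p q k : (q | snd (sp p q k) - p ^ Z.of_nat (S k))%Z.
Proof.
  induction k as [|k [m Hm]].
  - exists 0%Z. simpl. lia.
  - rewrite sp_S. simpl snd. rewrite (Nat2Z.inj_succ (S k)), Z.pow_succ_r by lia.
    exists (p * m - q * fst (sp p q k))%Z.
    set (P := (p ^ Z.of_nat (S k))%Z) in *. set (s := snd (sp p q k)) in *.
    assert (s = m * q + P)%Z by lia. rewrite H. ring.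
Qed.

Lemma cheb (c f : R) (n : nat) (p q : Z) : (q > 0)%Z -> Z.gcd p q = 1%Z ->
  IZR p = IZR q * c -> c = 2 * cos f -> cos (INR (S n) * f) = 1 -> q = 1%Z.
Proof.
  intros Hq Hg Hp Hc Hcos.
  destruct (sp_real p q c f n Hp Hc) as [_ H2].
  rewrite Hcos, pow_IZR in H2.
  assert (E : snd (sp p q n) = (q ^ Z.of_nat (S n) * 2)%Z).
  { apply eq_IZR. rewrite H2, mult_IZR. ring. }
  assert (D : (q | p ^ Z.of_nat (S n))%Z).
  { pose proof (sp_mod p q n) as M. rewrite E in M.
    assert (D2 : (q | q ^ Z.of_nat (S n) * 2)%Z).
    { apply Z.divide_mul_l. rewrite Nat2Z.inj_succ, Z.pow_succ_r by lia. apply Z.divide_factor_l. }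
    pose proof (Z.divide_sub_r _ _ _ D2 M) as D3.
    replace (q ^ Z.of_nat (S n) * 2 - (q ^ Z.of_nat (S n) * 2 - p ^ Z.of_nat (S n)))%Z
      with (p ^ Z.of_nat (S n))%Z in D3 by ring. exact D3. }
  apply div_pow in D; [|exact Hg]. apply Z.divide_1_r in D. lia.
Qed.

Lemma cos_int j : cos (IZR j * 2 * PI) = 1.
Proof.
  destruct j as [|k|k].
  - rewrite !Rmult_0_l. apply cos_0.
  - pose proof (cos_period 0 (Pos.to_nat k)) as H. rewrite Rplus_0_l, cos_0 in H.
    rewrite INR_IZR_INZ, positive_nat_Z in H. rewrite <- H. f_equal. ring.
  - pose proof (cos_period 0 (Pos.to_nat k)) as H. rewrite Rplus_0_l, cos_0 in H.
    rewrite INR_IZR_INZ, positive_nat_Z in H. rewrite <- H, <- cos_neg. f_equal.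
    rewrite <- Pos2Z.opp_pos, opp_IZR. ring.
Qed.

Lemma cos2atan u : cos (2 * atan u) = (1 - u * u) / (1 + u * u).
Proof.
  rewrite cos_2a_cos, cos_atan.
  assert (Hp : 0 < 1 + u²) by (unfold Rsqr; nra).
  pose proof (sqrt_sqrt (1 + u²) (Rlt_le _ _ Hp)) as Hs.
  pose proof (sqrt_lt_R0 _ Hp) as Hs0.
  unfold Rsqr in *. field_simplify_eq; [| lra]. rewrite <- !Rsqr_pow2. unfold Rsqr. rewrite Hs. ring.
Qed.

Lemma no_sqrt3 (u : Q) : Q2R u * Q2R u = 3 -> False.
Proof.
  intros H. destruct (Q2R_lowest u) as (p & q & Hq & Hg & Hp).
  assert (E : (p * p = 3 * q * q)%Z).
  { apply eq_IZR. rewrite !mult_IZR, Hp.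
    transitivity (IZR q * IZR q * (Q2R u * Q2R u)); [ring | rewrite H; ring]. }
  assert (D : (q | p ^ Z.of_nat 2)%Z). { exists (3 * q)%Z. change (Z.of_nat 2) with 2%Z. rewrite Z.pow_2_r. lia. }
  apply div_pow in D; [|exact Hg]. apply Z.divide_1_r in D. destruct D; subst; try lia; destruct (Z.le_gt_cases (Z.abs p) 1); nia.
Qed.

Lemma no_sqrt13 (u : Q) : 3 * (Q2R u * Q2R u) = 1 -> False.
Proof.
  intros H. destruct (Q2R_lowest u) as (p & q & Hq & Hg & Hp).
  assert (E : (3 * p * p = q * q)%Z).
  { apply eq_IZR. rewrite !mult_IZR, Hp.
    transitivity (IZR q * IZR q * (3 * (Q2R u * Q2R u))); [ring | rewrite H; ring]. }
  assert (D : (p | q ^ Z.of_nat 2)%Z). { exists (3 * p)%Z. change (Z.of_nat 2) with 2%Z. rewrite Z.pow_2_r. lia. }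
  apply div_pow in D; [|rewrite Z.gcd_comm; exact Hg]. apply Z.divide_1_r in D. destruct D; subst; try lia; destruct (Z.le_gt_cases (Z.abs q) 1); nia.
Qed.

Lemma angle_one (u : Q) (M j : Z) : 0 < Q2R u -> M <> 0%Z ->
  IZR M * atan (Q2R u) = IZR j * PI -> Q2R u = 1.
Proof.
  intros Hu HM Hrel. set (U := Q2R u) in *.
  set (c := (2 * (1 - u * u) / (1 + u * u))%Q).
  assert (Hd : ~ (1 + u * u == 0)%Q).
  { intro E. apply Qeq_eqR in E. rewrite Q2R_plus, Q2R_mult in E.
    unfold Q2R at 1 in E. simpl in E. fold U in E. nra. }
  assert (Hc : Q2R c = 2 * cos (2 * atan U)).
  { unfold c. rewrite Q2R_div by exact Hd. rewrite cos2atan.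
    rewrite Q2R_mult, Q2R_minus, Q2R_plus, !Q2R_mult. fold U.
    replace (Q2R 2) with 2 by (unfold Q2R; simpl; field). replace (Q2R 1) with 1 by (unfold Q2R; simpl; field). field. nra. }
  destruct (Q2R_lowest c) as (p & q & Hq & Hg & Hp).
  assert (Hn : exists n, S n = Z.abs_nat M) by (exists (Z.abs_nat M - 1)%nat; lia).
  destruct Hn as [n Hn].
  assert (Hcos : cos (INR (S n) * (2 * atan U)) = 1).
  { rewrite Hn, INR_IZR_INZ, Zabs2Nat.id_abs, abs_IZR.
    destruct (Rle_or_lt 0 (IZR M)) as [H0|H0].
    - rewrite Rabs_right by lra.
      replace (IZR M * (2 * atan U)) with (IZR j * 2 * PI) by (symmetry; transitivity (2 * (IZR M * atan U)); [ring | rewrite Hrel; ring]).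
      apply cos_int.
    - rewrite Rabs_left by lra.
      replace (- IZR M * (2 * atan U)) with (IZR (- j) * 2 * PI)
        by (symmetry; rewrite opp_IZR; transitivity (- (2 * (IZR M * atan U))); [ring | rewrite Hrel; ring]).
      apply cos_int. }
  pose proof (cheb _ _ n p q Hq Hg Hp Hc Hcos) as Hq1. subst q.
  rewrite Rmult_1_l in Hp.
  assert (Hc2 : Q2R c * (1 + U * U) = 2 * (1 - U * U)).
  { rewrite Hc, cos2atan. field. nra. }
  rewrite <- Hp in Hc2.
  assert (B1 : IZR p < 2) by nra.
  assert (B2 : -2 < IZR p) by nra.
  apply lt_IZR in B1. apply lt_IZR in B2.
  assert (p = -1 \/ p = 0 \/ p = 1)%Z as [E|[E|E]] by lia; subst p.
  - exfalso. apply (no_sqrt3 u). fold U. lra.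
  - nra.
  - exfalso. apply (no_sqrt13 u). fold U. lra.
Qed.

Theorem proposition1 (a0 a1 : Z) (u0 u1 : Q)
  (hu0 : 0 < Q2R u0) (hu1 : 0 < Q2R u1) (hlt : Q2R u1 < Q2R u0)
  (hrel : IZR a0 * atan (Q2R u0) + IZR a1 * atan (Q2R u1) = PI / 4) :
  irrational (atan (Q2R u0) / atan (Q2R u1)).
Proof.
  intros [r Hr].
  set (t0 := atan (Q2R u0)) in *. set (t1 := atan (Q2R u1)) in *.
  assert (Ht1 : 0 < t1) by (unfold t1; rewrite <- atan_0; apply atan_increasing; exact hu1).
  destruct (Q2R_lowest r) as (p & q & Hq & _ & Hp).
  rewrite <- Hr in Hp.
  assert (Hpq : IZR p * t1 = IZR q * t0) by (rewrite Hp; field; lra).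
  assert (HqR : 0 < IZR q) by (apply IZR_lt; lia).
  set (K := (4 * (a0 * p + a1 * q))%Z).
  assert (HK : IZR K * t1 = IZR q * PI).
  { unfold K. rewrite mult_IZR, plus_IZR, !mult_IZR.
    transitivity (4 * (IZR a0 * (IZR p * t1) + IZR q * (IZR a1 * t1))); [ring|].
    rewrite Hpq. transitivity (4 * IZR q * (IZR a0 * t0 + IZR a1 * t1)); [ring|].
    rewrite hrel. field. }
  assert (HK0 : K <> 0%Z).
  { intro E. rewrite E in HK. simpl in HK. pose proof PI_RGT_0. nra. }
  assert (E1 := angle_one u1 K q hu1 HK0 HK).
  assert (HK' : IZR K * t0 = IZR p * PI).
  { apply Rmult_eq_reg_l with (IZR q); [|lra].
    transitivity (IZR K * (IZR q * t0)); [ring|]. rewrite <- Hpq.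
    transitivity (IZR p * (IZR K * t1)); [ring|]. rewrite HK. ring. }
  assert (E0 := angle_one u0 K p hu0 HK0 HK').
  lra.
Qed.
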